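(* Let $(M_N)_{N\ge1}$ be probability measures, $M_N$ on $\mathbb{Y}(N)$, whose Jack generating functions $F_N(\mathbf p;\theta)=\sum_{\lambda\in\mathbb Y}a_{M_N}(\lambda)p_\lambda$ satisfy Assumption A with constant $\varepsilon>0$. Then for every fixed $r\ge1$ and every $N$, the series $$\sum_{i_1,\dots,i_r\ge1}\left|\frac{\partial^r\ln F_N(\mathbf p;\theta)}{\partial p_{i_1}\cdots\partial p_{i_r}}\Big|_{\mathbf p=1^N}\right|\,|x|^{i_1+\dots+i_r}$$ converges absolutely for all complex $x$ with $|x|<1+\varepsilon$.
   Context: Fix $\theta>0$. A Young diagram is a nonincreasing sequence $\lambda=(\lambda_1\ge\lambda_2\ge\dots\ge0)$ of integers with finitely many nonzero parts; $\ell(\lambda)$ is the number of nonzero parts, $|\lambda|=\sum_i\lambda_i$, $\mathbb Y(N)$ is the set of Young diagrams with $\ell(\lambda)\le N$, $\mathbb Y=\bigcup_N\mathbb Y(N)$. Symmetric functions in infinitely many variables $x_1,x_2,\dots$ are identified with $\mathbb R[p_1,p_2,\dots]$, $p_n=\sum_i x_i^n$, $p_\lambda=\prod_i p_{\lambda_i}$. $J_\lambda(\mathbf p;\theta)$ is the Jack symmetric function: the family is orthogonal for $\langle p_\lambda,p_\mu\rangle=\delta_{\lambda\mu}z_\lambda\theta^{-\ell(\lambda)}$ ($z_\lambda=\prod_i i^{m_i}m_i!$, $m_i$ = number of parts equal to $i$), $J_\lambda$ is a combination of monomial symmetric functions $m_\mu$ with $\mu$ below $\lambda$ in dominance order, and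 its leading term is $x_1^{\lambda_1}\cdots x_{\ell(\lambda)}^{\lambda_{\ell(\lambda)}}$. ''$\mathbf p=1^N$'' means $x_1=\dots=x_N=1$, $x_{N+1}=x_{N+2}=\dots=0$, i.e. $p_n=N$ for all $n$; $J_\lambda(1^N;\theta)>0$ for $\lambda\in\mathbb Y(N)$. The Jack generating function of a probability measure $M_N$ on $\mathbb Y(N)$ is $F_N(\mathbf p;\theta)=\sum_{\lambda\in\mathbb Y(N)}M_N(\lambda)J_\lambda(\mathbf p;\theta)/J_\lambda(1^N;\theta)$, expanded as a formal series $\sum_{\lambda\in\mathbb Y}a_{M_N}(\lambda)p_\lambda$; $F_N|_{\mathbf p=1^N}=1$ and $\ln F_N$ is understood as a series around $\mathbf p=1^N$. Assumption A: there is $\varepsilon>0$ such that for every $N$ the series $\sum_{\lambda\in\mathbb Y}|a_{M_N}(\lambda)|N^{\ell(\lambda)}|x|^{|\lambda|}$ converges for all complex $|x|<1+\varepsilon$. *)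

(* Defs.v *)
From Stdlib Require Import Reals Lra Lia List Arith.
Import ListNotations.
Open Scope R_scope.

Fixpoint noninc (l : list nat) : Prop :=
  match l with
  | x :: ((y :: _) as t) => (y <= x)%nat /\ noninc t
  | _ => True
  end.

Definition isYD (l : list nat) : Prop := noninc l /\ Forall (fun k => (1 <= k)%nat) l.

Definition ysize (l : list nat) : nat := fold_right Nat.add 0%nat l.
Definition ylen (l : list nat) : nat := length l.

Definition inY (N : nat) (l : list nat) : Prop := isYD l /\ (ylen l <= N)%nat.

Fixpoint parts_aux (fuel n m : nat) : list (list nat) :=
  match n with
  | O => [[]]
  | S _ =>
    match fuel with
    | O => []
    | S f => flat_map (fun k => map (cons k) (parts_aux f (n - k) k))
                      (seq 1 (Nat.min n m))
    end
  end.

Definition parts (n : nat) : list (list nat) := parts_aux n n n.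

Definition lsum {A} (f : A -> R) (s : list A) : R :=
  fold_right (fun x acc => f x + acc) 0 s.
Definition lprod {A} (f : A -> R) (s : list A) : R :=
  fold_right (fun x acc => f x * acc) 1 s.

Definition HasSum {A} (P : A -> Prop) (f : A -> R) (v : R) : Prop :=
  forall eps, 0 < eps -> exists S0 : list A, Forall P S0 /\
    forall S : list A, NoDup S -> Forall P S -> incl S0 S ->
      Rabs (lsum f S - v) < eps.

Definition AbsSummable {A} (P : A -> Prop) (f : A -> R) : Prop :=
  exists B, forall S : list A, NoDup S -> Forall P S -> lsum (fun x => Rabs (f x)) S <= B.

(** number of ways to distribute the parts of nu into the slots of mu so that
    slot i receives total mu_i: this is the coefficient of the monomial
    x_1^{mu_1} ... x_k^{mu_k} in p_nu. *)
Fixpoint xcoef (nu mu : list nat) : nat :=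
  match nu with
  | [] => if forallb (fun k => Nat.eqb k 0) mu then 1%nat else 0%nat
  | v :: vs =>
      fold_right Nat.add 0%nat
        (map (fun i => if Nat.leb v (nth i mu 0%nat)
                       then xcoef vs (firstn i mu ++ (nth i mu 0%nat - v)%nat :: skipn (S i) mu)
                       else 0%nat)
             (seq 0 (length mu)))
  end.

Definition dominated (mu lam : list nat) : Prop :=
  ysize mu = ysize lam /\
  forall k, (ysize (firstn k mu) <= ysize (firstn k lam))%nat.

Definition mult (i : nat) (l : list nat) : nat := count_occ Nat.eq_dec l i.

Definition zee (l : list nat) : R :=
  lprod INR l * lprod (fun i => INR (fact (mult i l))) (seq 1 (ysize l)).

(** [c lam nu] is the coefficient of p_nu in J_lambda(p; theta).
    IsJack theta c : c is the Jack family, characterized as in the paper: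
    J_lambda is a combination of p_nu with |nu| = |lambda| (i.e. homogeneous),
    its expansion in monomials m_mu only involves mu dominated by lambda,
    with coefficient 1 for m_lambda (leading term x^lambda), and the family is
    orthogonal for <p_lambda,p_mu> = delta z_lambda theta^{-ell(lambda)}. *)
Definition IsJack (theta : R) (c : list nat -> list nat -> R) : Prop :=
  forall lam, isYD lam ->
    (forall nu, isYD nu -> ysize nu <> ysize lam -> c lam nu = 0) /\
    (forall mu, isYD mu -> ~ dominated mu lam ->
       lsum (fun nu => c lam nu * INR (xcoef nu mu)) (parts (ysize lam)) = 0) /\
    lsum (fun nu => c lam nu * INR (xcoef nu lam)) (parts (ysize lam)) = 1 /\
    (forall lam', isYD lam' -> lam' <> lam ->
       lsum (fun nu => c lam nu * c lam' nu * zee nu / theta ^ ylen nu)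
            (parts (ysize lam)) = 0).

(** J_lambda(1^N) : p_n = N for all n *)
Definition Jat1 (c : list nat -> list nat -> R) (N : nat) (lam : list nat) : R :=
  lsum (fun nu => c lam nu * INR N ^ ylen nu) (parts (ysize lam)).

(** a_{M_N}(nu): coefficient of p_nu in
    F_N = sum_{lambda in Y(N)} M_N(lambda) J_lambda / J_lambda(1^N).
    Only lambda with |lambda| = |nu| contribute (J_lambda homogeneous). *)
Definition acoef (c : list nat -> list nat -> R) (M : nat -> list nat -> R)
    (N : nat) (nu : list nat) : R :=
  lsum (fun lam => if Nat.leb (ylen lam) N
                   then M N lam * c lam nu / Jat1 c N lam else 0)
       (parts (ysize nu)).

Definition IsProbY (N : nat) (m : list nat -> R) : Prop :=
  (forall lam, inY N lam -> 0 <= m lam) /\ HasSum (inY N) m 1.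

Fixpoint fall (m k : nat) : nat :=
  match k with O => 1%nat | S k' => (m * fall (m - 1) k')%nat end.

(** partial derivative d^{|B|} p_lambda / d p_{B_1} ... d p_{B_s}, evaluated at
    p = 1^N (the multiset B of positive indices). *)
Definition dpow (N : nat) (B lam : list nat) : R :=
  lprod (fun i => INR (fall (mult i lam) (mult i B))) (nodup Nat.eq_dec B)
  * INR N ^ (ylen lam - length B).

(** set partitions of a list (positions), blocks given by their entries *)
Fixpoint ins_each (x : nat) (P : list (list nat)) : list (list (list nat)) :=
  match P with
  | [] => []
  | b :: bs => ((x :: b) :: bs) :: map (cons b) (ins_each x bs)
  end.

Fixpoint setparts (l : list nat) : list (list (list nat)) :=
  match l with
  | [] => [[]]
  | x :: xs => flat_map (fun P => ([x] :: P) :: ins_each x P) (setparts xs)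
  end.

(** Given the values D B of the partial derivatives d^B F at the point
    (D [] = value of F), the partial derivative d^{is} ln F at that point
    (Faa di Bruno formula for the logarithm). *)
Definition logDeriv (D : list nat -> R) (is : list nat) : R :=
  lsum (fun P => (-1) ^ (length P - 1) * INR (fact (length P - 1))
                 * lprod (fun b => D b / D []) P)
       (setparts is).

Definition posIdx (l : list nat) : Prop := Forall (fun i => (1 <= i)%nat) l.

(* Main.v *)
Require Import Defs.
From Stdlib Require Import Reals List Permutation ClassicalEpsilon Classical Arith Lia Lra.
Import ListNotations.
Open Scope R_scope.

Section Gen.
Context {A : Type}.

Lemma lsum_nil (f : A -> R) : lsum f [] = 0.
Proof. reflexivity. Qed.
Lemma lsum_cons (f : A -> R) x S : lsum f (x :: S) = f x + lsum f S.
Proof. reflexivity. Qed.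

Lemma lsum_ext (f g : A -> R) S : (forall x, f x = g x) -> lsum f S = lsum g S.
Proof. intros H; induction S; simpl; [auto|rewrite IHS, H; auto]. Qed.

Lemma lsum_app (f : A -> R) S1 S2 : lsum f (S1 ++ S2) = lsum f S1 + lsum f S2.
Proof. induction S1; simpl; [ring|rewrite IHS1; ring]. Qed.

Lemma lsum_le (f g : A -> R) S : (forall x, In x S -> f x <= g x) -> lsum f S <= lsum g S.
Proof. induction S; simpl; intros H; [lra|].
  pose proof (H a (or_introl eq_refl)). pose proof (IHS (fun x Hx => H x (or_intror Hx))). lra. Qed.

Lemma lsum_nonneg (f : A -> R) S : (forall x, In x S -> 0 <= f x) -> 0 <= lsum f S.
Proof. intros H. pose proof (lsum_le (fun _ => 0) f S H).
  assert (lsum (fun _ : A => 0) S = 0). { clear. induction S; simpl; [lra|rewrite IHS; lra]. } lra. Qed.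

Lemma lsum_scal (f : A -> R) c S : lsum (fun x => c * f x) S = c * lsum f S.
Proof. induction S; simpl; [ring|rewrite IHS; ring]. Qed.

Lemma lsum_minus (f g : A -> R) S : lsum (fun x => f x - g x) S = lsum f S - lsum g S.
Proof. induction S; simpl; [ring|rewrite IHS; ring]. Qed.

Lemma lsum_const (c : R) S : lsum (fun _ : A => c) S = INR (length S) * c.
Proof. induction S; simpl length; [simpl; ring|rewrite lsum_cons, IHS, S_INR; ring]. Qed.

Lemma lsum_abs (f : A -> R) S : Rabs (lsum f S) <= lsum (fun x => Rabs (f x)) S.
Proof. induction S; simpl. rewrite Rabs_R0; lra.
  eapply Rle_trans; [apply Rabs_triang|]. lra. Qed.

Lemma lsum_incl (g : A -> R) S1 : NoDup S1 -> forall S, incl S1 S ->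
  (forall x, In x S -> 0 <= g x) -> lsum g S1 <= lsum g S.
Proof.
  induction 1 as [|x S1 Hx Hnd IH]; intros S Hinc Hpos.
  - simpl. apply lsum_nonneg; auto.
  - destruct (in_split x S (Hinc x (or_introl eq_refl))) as [l1 [l2 ->]].
    rewrite lsum_app, lsum_cons.
    assert (lsum g S1 <= lsum g (l1 ++ l2)).
    { apply IH.
      - intros y Hy. assert (In y (l1 ++ x :: l2)) by (apply Hinc; right; auto).
        apply in_app_or in H. apply in_or_app. destruct H as [H|[H|H]]; auto.
        subst; contradiction.
      - intros y Hy; apply Hpos. apply in_app_or in Hy; apply in_or_app; simpl; tauto. }
    rewrite lsum_app in H. simpl. lra.
Qed.

Lemma sup_exists (P : A -> Prop) (g : A -> R) Bd :
  (forall x, 0 <= g x) ->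
  (forall S, NoDup S -> Forall P S -> lsum g S <= Bd) ->
  exists u, 0 <= u /\ (forall S, NoDup S -> Forall P S -> lsum g S <= u) /\
    (forall e, 0 < e -> exists S1, NoDup S1 /\ Forall P S1 /\ u - e < lsum g S1) /\
    (forall Bd', (forall S, NoDup S -> Forall P S -> lsum g S <= Bd') -> u <= Bd').
Proof.
  intros Hg HB.
  set (E := fun y => exists S, NoDup S /\ Forall P S /\ y = lsum g S).
  assert (Hb : bound E). { exists Bd. intros y [S [H1 [H2 ->]]]. auto. }
  assert (Hne : exists y, E y). { exists 0. exists []. repeat split; constructor. }
  destruct (completeness E Hb Hne) as [u [Hub Hlub]].
  exists u. split; [|split; [|split]].
  - apply Hub. exists []. repeat split; constructor.
  - intros S H1 H2. apply Hub. exists S; auto.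
  - intros e He. apply NNPP. intros Hn.
    assert (u <= u - e); [|lra].
    apply Hlub. intros y [S [H1 [H2 ->]]].
    destruct (Rle_lt_dec (lsum g S) (u - e)); auto.
    exfalso; apply Hn; exists S; auto.
  - intros Bd' H. apply Hlub. intros y [S [H1 [H2 ->]]]. auto.
Qed.

Lemma abs_sum_exists (P : A -> Prop) (f : A -> R) Bd :
  (forall S, NoDup S -> Forall P S -> lsum (fun x => Rabs (f x)) S <= Bd) ->
  exists v, HasSum P f v /\
   forall Bd', (forall S, NoDup S -> Forall P S -> lsum (fun x => Rabs (f x)) S <= Bd') ->
     Rabs v <= Bd'.
Proof.
  intros HB.
  set (gp := fun x => Rmax (f x) 0). set (gm := fun x => Rmax (- f x) 0).
  assert (Hgp : forall x, 0 <= gp x /\ gp x <= Rabs (f x)).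
  { intros x; unfold gp, Rmax, Rabs; repeat destruct Rle_dec; repeat destruct Rcase_abs; lra. }
  assert (Hgm : forall x, 0 <= gm x /\ gm x <= Rabs (f x)).
  { intros x; unfold gm, Rmax, Rabs; repeat destruct Rle_dec; repeat destruct Rcase_abs; lra. }
  assert (Hf : forall x, f x = gp x - gm x).
  { intros x; unfold gp, gm, Rmax; repeat destruct Rle_dec; lra. }
  assert (Hbp : forall Bd', (forall S, NoDup S -> Forall P S -> lsum (fun x => Rabs (f x)) S <= Bd') ->
     forall S, NoDup S -> Forall P S -> lsum gp S <= Bd').
  { intros Bd' H S H1 H2. eapply Rle_trans; [|apply (H S H1 H2)]. apply lsum_le. intros; apply Hgp. }
  assert (Hbm : forall Bd', (forall S, NoDup S -> Forall P S -> lsum (fun x => Rabs (f x)) S <= Bd') ->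
     forall S, NoDup S -> Forall P S -> lsum gm S <= Bd').
  { intros Bd' H S H1 H2. eapply Rle_trans; [|apply (H S H1 H2)]. apply lsum_le. intros; apply Hgm. }
  destruct (sup_exists P gp Bd (fun x => proj1 (Hgp x)) (Hbp Bd HB)) as [up [Hup0 [Hup1 [Hup2 Hup3]]]].
  destruct (sup_exists P gm Bd (fun x => proj1 (Hgm x)) (Hbm Bd HB)) as [um [Hum0 [Hum1 [Hum2 Hum3]]]].
  exists (up - um). split.
  - intros e He.
    destruct (Hup2 (e/2)) as [S1 [N1 [F1 L1]]]; [lra|].
    destruct (Hum2 (e/2)) as [S2 [N2 [F2 L2]]]; [lra|].
    exists (S1 ++ S2). split; [apply Forall_app; auto|].
    intros S HN HF Hinc.
    assert (lsum gp S1 <= lsum gp S).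
    { apply lsum_incl; auto. intros y Hy; apply Hinc, in_or_app; auto. intros; apply Hgp. }
    assert (lsum gm S2 <= lsum gm S).
    { apply lsum_incl; auto. intros y Hy; apply Hinc, in_or_app; auto. intros; apply Hgm. }
    pose proof (Hup1 S HN HF). pose proof (Hum1 S HN HF).
    assert (lsum f S = lsum gp S - lsum gm S).
    { rewrite <- lsum_minus. apply lsum_ext. auto. }
    rewrite H3. apply Rabs_def1; lra.
  - intros Bd' H. pose proof (Hup3 Bd' (Hbp Bd' H)). pose proof (Hum3 Bd' (Hbm Bd' H)).
    apply Rabs_le; lra.
Qed.
End Gen.
Lemma ysize_app l1 l2 : ysize (l1 ++ l2) = (ysize l1 + ysize l2)%nat.
Proof. induction l1; simpl; auto. unfold ysize in *; simpl; rewrite IHl1; lia. Qed.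

Lemma ysize_perm l l' : Permutation l l' -> ysize l = ysize l'.
Proof. induction 1; unfold ysize in *; simpl; lia. Qed.

Lemma in_le_ysize x l : In x l -> (x <= ysize l)%nat.
Proof. induction l; simpl; [tauto|]. intros [->|H]; unfold ysize in *; simpl; [lia|]. specialize (IHl H); lia. Qed.

Lemma len_le_ysize l : Forall (fun k => (1 <= k)%nat) l -> (length l <= ysize l)%nat.
Proof. induction 1; unfold ysize in *; simpl; lia. Qed.

Lemma multiset_sum B : forall L, (forall i, In i B -> (mult i B <= mult i L)%nat) -> (ysize B <= ysize L)%nat.
Proof.
  induction B as [|x B IH]; intros L H; [unfold ysize; simpl; lia|].
  assert (Hx : In x L).
  { apply (count_occ_In Nat.eq_dec). specialize (H x (or_introl eq_refl)).
    unfold mult in H. simpl in H. destruct (Nat.eq_dec x x); [lia|congruence]. }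
  destruct (in_split x L Hx) as [l1 [l2 ->]].
  assert (ysize B <= ysize (l1 ++ l2))%nat.
  { apply IH. intros i Hi. specialize (H i (or_intror Hi)). unfold mult in *.
    rewrite count_occ_app in *. simpl in H. destruct (Nat.eq_dec x i); lia. }
  rewrite ysize_app in *. unfold ysize in *; simpl. lia.
Qed.

Lemma fall_zero k : forall m, (m < k)%nat -> fall m k = 0%nat.
Proof. induction k; intros m H; [lia|]. simpl. destruct m; [lia|]. rewrite IHk; lia. Qed.

Lemma fall_le k : forall m, (fall m k <= m ^ k)%nat.
Proof. induction k; intros m; simpl; [lia|]. apply Nat.mul_le_mono_l.
  eapply Nat.le_trans; [apply IHk|]. apply Nat.pow_le_mono_l; lia. Qed.

Section Prod.
Context {A : Type}.
Lemma lprod_nonneg (f : A -> R) L : (forall x, In x L -> 0 <= f x) -> 0 <= lprod f L.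
Proof. induction L; simpl; intros H; [lra|]. apply Rmult_le_pos; auto. Qed.
Lemma lprod_le (f g : A -> R) L : (forall x, In x L -> 0 <= f x <= g x) -> lprod f L <= lprod g L.
Proof. induction L; simpl; intros H; [lra|]. apply Rmult_le_compat; try apply H; auto.
  apply lprod_nonneg; intros; apply H; auto. Qed.
Lemma lprod_abs (f : A -> R) L : Rabs (lprod f L) = lprod (fun x => Rabs (f x)) L.
Proof. induction L; simpl; [apply Rabs_R1|]. rewrite Rabs_mult, IHL; auto. Qed.
Lemma lprod_nz (f : A -> R) L : lprod f L <> 0 -> forall x, In x L -> f x <> 0.
Proof. induction L; simpl; [tauto|]. intros H x [->|Hx] E.
  - rewrite E in H; lra.
  - apply (IHL (fun E' => H ltac:(rewrite E'; ring)) x Hx E). Qed.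
Lemma lprod_bound (f : A -> R) L X : 1 <= X -> (forall x, In x L -> 0 <= f x <= X) -> lprod f L <= X ^ length L.
Proof. intros HX. induction L; simpl; intros H; [lra|]. apply Rmult_le_compat; try apply H; auto.
  apply lprod_nonneg; intros; apply H; auto. Qed.
End Prod.

Lemma dpow_nonneg N B lam : 0 <= dpow N B lam.
Proof. unfold dpow. apply Rmult_le_pos. apply lprod_nonneg; intros; apply pos_INR.
  apply pow_le, pos_INR. Qed.

Lemma dpow_bound N B lam : (1 <= N)%nat ->
  dpow N B lam <= INR N ^ ylen lam * (INR (ylen lam) + 1) ^ (length B * length B).
Proof.
  intros HN. unfold dpow. rewrite Rmult_comm. apply Rmult_le_compat.
  - apply pow_le, pos_INR.
  - apply lprod_nonneg; intros; apply pos_INR.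
  - apply Rle_pow; [apply (le_INR 1); auto|lia].
  - rewrite pow_mult. eapply Rle_trans.
    + apply lprod_bound with (X := (INR (ylen lam) + 1) ^ length B).
      * apply pow_R1_Rle. pose proof (pos_INR (ylen lam)); lra.
      * intros i Hi. split; [apply pos_INR|].
        eapply Rle_trans; [apply le_INR, fall_le|]. rewrite pow_INR.
        apply Rle_trans with ((INR (ylen lam)+1) ^ mult i B).
        { apply pow_incr; split; [apply pos_INR|].
          apply Rle_trans with (INR (ylen lam)); [apply le_INR; unfold ylen, mult; apply count_occ_bound|]. lra. }
        apply Rle_pow; [pose proof (pos_INR (ylen lam)); lra|]. unfold mult; apply count_occ_bound.
    + apply Rle_pow. apply pow_R1_Rle. pose proof (pos_INR (ylen lam)); lra.
      apply NoDup_incl_length. apply NoDup_nodup. intros x Hx; apply nodup_In in Hx; auto.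
Qed.

Lemma dpow_support N B lam : dpow N B lam <> 0 -> (ysize B <= ysize lam)%nat.
Proof.
  unfold dpow. intros H. assert (H1 : lprod (fun i => INR (fall (mult i lam) (mult i B))) (nodup Nat.eq_dec B) <> 0).
  { intros E; apply H; rewrite E; ring. }
  apply multiset_sum. intros i Hi.
  pose proof (lprod_nz _ _ H1 i (proj2 (nodup_In _ _ _) Hi)).
  destruct (le_lt_dec (mult i B) (mult i lam)); auto.
  simpl in H0. rewrite (fall_zero (mult i B) (mult i lam)) in H0; auto. simpl in H0; lra.
Qed.
Lemma ins_each_props x P Q : In Q (ins_each x P) ->
  Permutation (concat Q) (x :: concat P) /\
  (Forall (fun b => b <> []) P -> Forall (fun b => b <> []) Q).
Proof.
  revert Q. induction P as [|b bs IH]; simpl; intros Q HQ; [tauto|].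
  destruct HQ as [<-|HQ].
  - split; [simpl; auto|]. intros H; inversion H; subst; constructor; auto; discriminate.
  - apply in_map_iff in HQ. destruct HQ as [Q' [<- HQ']].
    destruct (IH Q' HQ') as [H1 H2]. split.
    + simpl. eapply perm_trans; [apply Permutation_app_head, H1|].
      apply Permutation_sym, Permutation_middle.
    + intros H; inversion H; subst; constructor; auto.
Qed.

Lemma ins_each_len x P : length (ins_each x P) = length P.
Proof. induction P; simpl; auto. rewrite length_map; auto. Qed.

Lemma setparts_props l P : In P (setparts l) ->
  Permutation (concat P) l /\ Forall (fun b => b <> []) P.
Proof.
  revert P. induction l as [|x xs IH]; simpl; intros P HP.
  - destruct HP as [<-|[]]. simpl; auto.
  - apply in_flat_map in HP. destruct HP as [P' [HP' HP]].
    destruct (IH P' HP') as [H1 H2]. destruct HP as [<-|HP].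
    + simpl; split; [auto|constructor; auto; discriminate].
    + destruct (ins_each_props x P' P HP) as [H3 H4]. split; auto.
      eapply perm_trans; [apply H3|]. auto.
Qed.

Lemma len_concat_ne (P : list (list nat)) : Forall (fun b => b <> []) P -> (length P <= length (concat P))%nat.
Proof. induction 1; simpl; auto. rewrite length_app. destruct x; [congruence|simpl; lia]. Qed.

Lemma setparts_len_blocks l P : In P (setparts l) -> (length P <= length l)%nat.
Proof. intros H; destruct (setparts_props l P H) as [H1 H2].
  rewrite <- (Permutation_length H1). apply len_concat_ne; auto. Qed.

Lemma flat_map_len {A B} (f : A -> list B) L m : (forall x, In x L -> (length (f x) <= m)%nat) ->
  (length (flat_map f L) <= length L * m)%nat.
Proof. induction L; simpl; intros H; [lia|]. rewrite length_app.
  pose proof (H a (or_introl eq_refl)). specialize (IHL (fun x Hx => H x (or_intror Hx))). lia. Qed.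

Lemma setparts_len l : (length (setparts l) <= fact (length l))%nat.
Proof. induction l as [|x xs IH]; simpl; [lia|].
  eapply Nat.le_trans; [apply flat_map_len with (m := S (length xs))|].
  - intros P HP. simpl. rewrite ins_each_len. pose proof (setparts_len_blocks xs P HP). lia.
  - nia. Qed.

Fixpoint grid (r M : nat) : list (list nat) :=
  match r with
  | O => [[]]
  | S r' => flat_map (fun h => map (cons h) (grid r' M)) (seq 0 (S M))
  end.

Lemma in_grid M l : Forall (fun x => (x <= M)%nat) l -> In l (grid (length l) M).
Proof. induction 1; [simpl; auto|]. cbn [length grid]. apply in_flat_map. exists x. split.
  apply in_seq; lia. apply in_map; auto. Qed.

Lemma lsum_map {A B} (f : B -> R) (g : A -> B) L : lsum f (map g L) = lsum (fun x => f (g x)) L.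
Proof. induction L; simpl; auto. rewrite IHL; auto. Qed.

Lemma lsum_app' {A} (f : A -> R) S1 S2 : lsum f (S1 ++ S2) = lsum f S1 + lsum f S2.
Proof. induction S1; simpl; [ring|rewrite IHS1; ring]. Qed.

Lemma lsum_flat_map {A B} (f : B -> R) (g : A -> list B) L : lsum f (flat_map g L) = lsum (fun x => lsum f (g x)) L.
Proof. induction L; simpl; auto. rewrite lsum_app', IHL; auto. Qed.

Lemma lsum_scal' {A} (f : A -> R) c S : lsum (fun x => c * f x) S = c * lsum f S.
Proof. induction S; simpl; [ring|rewrite IHS; ring]. Qed.

Lemma lsum_ext0 {A} (f g : A -> R) S : (forall x, f x = g x) -> lsum f S = lsum g S.
Proof. intros H; induction S; simpl; [auto|rewrite IHS, H; auto]. Qed.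
Lemma lsum_comm_scal {A} (f : A -> R) c S : lsum (fun x => f x * c) S = lsum f S * c.
Proof. induction S; simpl; [ring|rewrite IHS; ring]. Qed.
Lemma lsum_nonneg_gen {A} (f : A -> R) S : (forall x, 0 <= f x) -> 0 <= lsum f S.
Proof. intros H; induction S; simpl; [lra|]. pose proof (H a); lra. Qed.

Lemma geo_seq q n : forall a, lsum (fun h => q ^ h) (seq a n) * (1 - q) = q ^ a - q ^ (a + n).
Proof. induction n; intros a; simpl. rewrite Nat.add_0_r; ring.
  rewrite Rmult_plus_distr_r, IHn. replace (S a + n)%nat with (a + S n)%nat by lia. simpl. ring. Qed.

Lemma geo_bound q n : 0 <= q < 1 -> lsum (fun h => q ^ h) (seq 0 n) <= / (1 - q).
Proof. intros Hq. pose proof (geo_seq q n 0). simpl in H.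
  assert (0 <= q ^ n) by (apply pow_le; lra).
  apply Rmult_le_reg_r with (1 - q); [lra|]. rewrite Rinv_l by lra. lra. Qed.

Lemma grid_sum q M r : 0 <= q < 1 -> lsum (fun l => q ^ ysize l) (grid r M) <= (/ (1 - q)) ^ r.
Proof. intros Hq. induction r; cbn [grid]. unfold ysize; simpl; lra.
  rewrite lsum_flat_map.
  assert (forall h, lsum (fun l => q ^ ysize l) (map (cons h) (grid r M)) = q ^ h * lsum (fun l => q ^ ysize l) (grid r M)).
  { intros h. rewrite lsum_map, <- lsum_scal'. apply lsum_ext0. intros l.
    unfold ysize; simpl. rewrite pow_add; ring. }
  transitivity (lsum (fun h => q ^ h * lsum (fun l => q ^ ysize l) (grid r M)) (seq 0 (S M))).
  { right. clear IHr. induction (seq 0 (S M)); simpl; auto. rewrite IHl, H; auto. }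
  rewrite lsum_comm_scal. simpl pow. 
  apply Rmult_le_compat. apply lsum_nonneg_gen; intros; apply pow_le; lra.
  apply lsum_nonneg_gen; intros; apply pow_le; lra. apply geo_bound; auto. auto.
Qed.


Lemma bern h n : 0 <= h -> 1 + INR n * h <= (1 + h) ^ n.
Proof. intros Hh. induction n. simpl; lra. rewrite S_INR. simpl.
  assert (0 <= INR n * h * h) by (apply Rmult_le_pos; [apply Rmult_le_pos; [apply pos_INR|]|]; lra).
  nra. Qed.

Lemma lin_exp b : 1 < b -> exists C, 0 < C /\ forall n, INR n + 1 <= C * b ^ n.
Proof. intros Hb. set (h := Rmin 1 (b - 1)).
  assert (0 < h) by (unfold h, Rmin; destruct Rle_dec; lra).
  assert (h <= 1) by (unfold h, Rmin; destruct Rle_dec; lra).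
  assert (h <= b - 1) by (unfold h, Rmin; destruct Rle_dec; lra).
  exists (/ h). split; [apply Rinv_0_lt_compat; auto|]. intros n.
  pose proof (bern (b - 1) n ltac:(lra)). replace (1 + (b - 1)) with b in H2 by ring.
  apply Rmult_le_reg_l with h; auto. rewrite <- Rmult_assoc, Rinv_r by lra.
  pose proof (pos_INR n). nra. Qed.

Lemma poly_exp k : forall a, 1 < a -> exists C, 0 < C /\ forall n, (INR n + 1) ^ k <= C * a ^ n.
Proof.
  induction k; intros a Ha.
  - exists 1. split; [lra|]. intros n. simpl. rewrite Rmult_1_l. apply pow_R1_Rle; lra.
  - set (b := sqrt a).
    assert (Hb : 1 < b). { unfold b. rewrite <- sqrt_1. apply sqrt_lt_1; lra. }
    assert (Hbb : b * b = a) by (apply sqrt_sqrt; lra).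
    destruct (IHk b Hb) as [C1 [HC1 H1]]. destruct (lin_exp b Hb) as [C2 [HC2 H2]].
    exists (C2 * C1). split; [nra|]. intros n. simpl.
    replace (a ^ n) with (b ^ n * b ^ n) by (rewrite <- Hbb, Rpow_mult_distr; ring).
    assert (0 <= INR n + 1) by (pose proof (pos_INR n); lra).
    assert (0 <= (INR n + 1) ^ k) by (apply pow_le; auto).
    specialize (H1 n). specialize (H2 n).
    replace (C2 * C1 * (b ^ n * b ^ n)) with ((C2 * b ^ n) * (C1 * b ^ n)) by ring.
    apply Rmult_le_compat; auto.
Qed.

Lemma pw (a : list nat -> R) N B lam k C T rho :
  (1 <= N)%nat -> 0 < rho <= 1 -> 0 <= T -> 0 < C ->
  (forall n, (INR n + 1) ^ k <= C * (T * rho) ^ n) ->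
  (length B * length B <= k)%nat -> isYD lam ->
  Rabs (a lam * dpow N B lam) <=
    C * rho ^ ysize B * (Rabs (a lam) * INR N ^ ylen lam * T ^ ysize lam).
Proof.
  intros HN Hr HT HC Hp Hk Hl.
  assert (HNp : 0 <= INR N ^ ylen lam) by (apply pow_le, pos_INR).
  assert (HTp : 0 <= T ^ ysize lam) by (apply pow_le; auto).
  assert (Hrp : 0 <= rho ^ ysize B) by (apply pow_le; lra).
  assert (Hap := Rabs_pos (a lam)).
  rewrite Rabs_mult, (Rabs_pos_eq (dpow N B lam)) by apply dpow_nonneg.
  destruct (Req_dec (dpow N B lam) 0) as [E|E].
  - rewrite E, Rmult_0_r. apply Rmult_le_pos; [apply Rmult_le_pos; lra|].
    apply Rmult_le_pos; [apply Rmult_le_pos|]; auto.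
  - pose proof (dpow_support N B lam E) as Hs.
    assert (Hd : dpow N B lam <= INR N ^ ylen lam * (C * T ^ ysize lam * rho ^ ysize B)).
    { eapply Rle_trans; [apply dpow_bound; auto|]. apply Rmult_le_compat_l; auto.
      assert (H1 : (INR (ylen lam) + 1) ^ (length B * length B) <= (INR (ysize lam) + 1) ^ k).
      { apply Rle_trans with ((INR (ysize lam) + 1) ^ (length B * length B)).
        - apply pow_incr. split; [pose proof (pos_INR (ylen lam)); lra|].
          assert (INR (ylen lam) <= INR (ysize lam)) by (apply le_INR, len_le_ysize, (proj2 Hl)). lra.
        - apply Rle_pow; auto. pose proof (pos_INR (ysize lam)); lra. }
      eapply Rle_trans; [apply H1|]. eapply Rle_trans; [apply Hp|].
      rewrite Rpow_mult_distr. rewrite Rmult_assoc. apply Rmult_le_compat_l; [lra|].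
      apply Rmult_le_compat_l; auto.
      replace (ysize lam) with (ysize B + (ysize lam - ysize B))%nat by lia.
      rewrite pow_add. rewrite <- (Rmult_1_r (rho ^ ysize B)) at 2.
      apply Rmult_le_compat_l; auto.
      rewrite <- (pow1 (ysize lam - ysize B)). apply pow_incr; lra. }
    apply Rle_trans with (Rabs (a lam) * (INR N ^ ylen lam * (C * T ^ ysize lam * rho ^ ysize B))).
    + apply Rmult_le_compat_l; auto.
    + right; ring.
Qed.

Lemma lprod_Epow (E rho : R) (P : list (list nat)) :
  lprod (fun b => E * rho ^ ysize b) P = E ^ length P * rho ^ ysize (concat P).
Proof. induction P; simpl; [unfold ysize; simpl; ring|]. rewrite IHP, ysize_app, pow_add; ring. Qed.

Lemma len_in_concat (b : list nat) P : In b P -> (length b <= length (concat P))%nat.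
Proof. intros H; destruct (in_split b P H) as [l1 [l2 ->]].
  rewrite concat_app; simpl; rewrite !length_app; lia. Qed.

Theorem proposition2p1 :
  forall (theta : R) (c : list nat -> list nat -> R)
         (M : nat -> list nat -> R) (eps : R),
    0 < theta ->
    IsJack theta c ->
    (forall N, (1 <= N)%nat -> IsProbY N (M N)) ->
    0 < eps ->
    (* Assumption A, for complex x with |x| = t *)
    (forall N, (1 <= N)%nat -> forall t, 0 <= t < 1 + eps ->
       AbsSummable isYD
         (fun lam => Rabs (acoef c M N lam) * INR N ^ ylen lam * t ^ ysize lam)) ->
    forall (r N : nat), (1 <= r)%nat -> (1 <= N)%nat ->
    forall t, 0 <= t < 1 + eps ->
    exists D : list nat -> R,
      (* D B = d^{|B|} F_N / d p_{B_1} ... d p_{B_s} at p = 1^N *)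
      (forall B, posIdx B ->
         HasSum isYD (fun lam => acoef c M N lam * dpow N B lam) (D B)) /\
      AbsSummable (fun is => length is = r /\ posIdx is)
        (fun is => Rabs (logDeriv D is) * t ^ fold_right Nat.add 0%nat is).
Proof.
  intros theta c M eps _ _ _ Heps HA r N Hr HN t Ht.
  set (t1 := Rmax t 1).
  assert (Ht1 : 1 <= t1 /\ t <= t1 /\ t1 < 1 + eps) by (unfold t1, Rmax; destruct Rle_dec; lra).
  set (d := (1 + eps - t1) / 3).
  assert (Hd : 0 < d) by (unfold d; lra).
  set (T1 := t1 + d). set (T := t1 + 2 * d).
  set (rho := / T1).
  assert (Hrho : 0 < rho <= 1).
  { unfold rho. split. apply Rinv_0_lt_compat; unfold T1; lra.
    rewrite <- Rinv_1. apply Rinv_le_contravar; unfold T1; lra. }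
  assert (Halpha : 1 < T * rho).
  { unfold rho. apply Rmult_lt_reg_r with T1; [unfold T1; lra|].
    rewrite Rmult_assoc, Rinv_l by (unfold T1; lra). unfold T, T1; lra. }
  destruct (HA N HN T ltac:(unfold T, d; lra)) as [G HG].
  set (a := acoef c M N).
  set (g := fun lam => Rabs (a lam) * INR N ^ ylen lam * T ^ ysize lam).
  assert (HG' : forall S, NoDup S -> Forall isYD S -> lsum g S <= G).
  { intros S H1 H2. eapply Rle_trans; [|apply (HG S H1 H2)]. apply lsum_le. intros; apply Rle_abs. }
  assert (HG0 : 0 <= G) by (apply (HG' []); constructor).
  assert (HT0 : 0 <= T) by (unfold T; lra).
  assert (Hsum : forall B k C, 0 < C -> (forall n, (INR n + 1) ^ k <= C * (T * rho) ^ n) ->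
     (length B * length B <= k)%nat ->
     forall S, NoDup S -> Forall isYD S ->
       lsum (fun x => Rabs (a x * dpow N B x)) S <= C * rho ^ ysize B * G).
  { intros B k C HC Hp Hk S H1 H2.
    eapply Rle_trans. apply lsum_le with (g := fun x => C * rho ^ ysize B * g x).
    { intros x Hx. apply (pw a N B x k C T rho); auto. rewrite Forall_forall in H2; auto. }
    rewrite lsum_scal. apply Rmult_le_compat_l; [|auto].
    apply Rmult_le_pos; [lra|apply pow_le; lra]. }
  assert (Hex : forall B, exists v, HasSum isYD (fun lam => a lam * dpow N B lam) v /\
     forall Bd', (forall S, NoDup S -> Forall isYD S ->
        lsum (fun x => Rabs (a x * dpow N B x)) S <= Bd') -> Rabs v <= Bd').
  { intros B. destruct (poly_exp (length B * length B) (T * rho) Halpha) as [C [HC Hp]].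
    apply abs_sum_exists with (Bd := C * rho ^ ysize B * G). apply (Hsum B _ C HC Hp (le_n _)). }
  set (D := fun B => proj1_sig (constructive_indefinite_description _ (Hex B))).
  exists D. split.
  { intros B _. exact (proj1 (proj2_sig (constructive_indefinite_description _ (Hex B)))). }
  destruct (poly_exp (r * r) (T * rho) Halpha) as [Cr [HCr Hpr]].
  assert (HDb : forall b, (length b <= r)%nat -> Rabs (D b) <= Cr * rho ^ ysize b * G).
  { intros b Hb. apply (proj2 (proj2_sig (constructive_indefinite_description _ (Hex b)))).
    apply (Hsum b (r * r)%nat Cr HCr Hpr). apply Nat.mul_le_mono; auto. }
  set (K := Rabs (/ D [])).
  set (E := Rmax 1 (Cr * G * K)).
  assert (HE1 : 1 <= E /\ Cr * G * K <= E) by (unfold E, Rmax; destruct Rle_dec; lra).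
  assert (HK : 0 <= K) by apply Rabs_pos.
  assert (HE : forall b, (length b <= r)%nat -> Rabs (D b / D []) <= E * rho ^ ysize b).
  { intros b Hb. unfold Rdiv. rewrite Rabs_mult. fold K.
    assert (0 <= rho ^ ysize b) by (apply pow_le; lra).
    apply Rle_trans with (Cr * rho ^ ysize b * G * K).
    - apply Rmult_le_compat_r; auto.
    - replace (Cr * rho ^ ysize b * G * K) with ((Cr * G * K) * rho ^ ysize b) by ring.
      apply Rmult_le_compat_r; tauto. }
  assert (Hlog : forall is, length is = r ->
     Rabs (logDeriv D is) <= INR (fact r) * (INR (fact r) * (E ^ r * rho ^ ysize is))).
  { intros is Hl. unfold logDeriv.
    eapply Rle_trans; [apply lsum_abs|].
    eapply Rle_trans; [apply lsum_le with (g := fun _ => INR (fact r) * (E ^ r * rho ^ ysize is))|].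
    - intros P HP. destruct (setparts_props is P HP) as [Hperm Hne].
      pose proof (setparts_len_blocks is P HP) as HlP.
      rewrite !Rabs_mult, pow_1_abs, Rmult_1_l, (Rabs_pos_eq (INR _)) by apply pos_INR.
      apply Rmult_le_compat; [apply pos_INR|apply Rabs_pos| |].
      + apply le_INR, fact_le. lia.
      + rewrite lprod_abs. eapply Rle_trans.
        * apply lprod_le with (g := fun b => E * rho ^ ysize b).
          intros b Hb. split; [apply Rabs_pos|]. apply HE.
          rewrite <- Hl, <- (Permutation_length Hperm). apply len_in_concat; auto.
        * rewrite lprod_Epow, (ysize_perm _ _ Hperm).
          apply Rmult_le_compat_r; [apply pow_le; lra|]. apply Rle_pow; [tauto|lia].
    - rewrite lsum_const. apply Rmult_le_compat_r.
      + apply Rmult_le_pos; [apply pos_INR|apply Rmult_le_pos; apply pow_le; lra].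
      + apply le_INR. rewrite <- Hl. apply setparts_len. }
  set (q := t1 * rho).
  assert (Hq : 0 <= q < 1).
  { unfold q, rho. split. apply Rmult_le_pos; [lra|apply Rlt_le, Rinv_0_lt_compat; unfold T1; lra].
    apply Rmult_lt_reg_r with T1; [unfold T1; lra|].
    rewrite Rmult_assoc, Rinv_l by (unfold T1; lra). unfold T1; lra. }
  set (K0 := INR (fact r) * (INR (fact r) * E ^ r)).
  assert (HK0 : 0 <= K0).
  { unfold K0. apply Rmult_le_pos; [apply pos_INR|apply Rmult_le_pos; [apply pos_INR|apply pow_le; lra]]. }
  exists (K0 * (/ (1 - q)) ^ r).
  intros S HS HF.
  eapply Rle_trans. apply lsum_le with (g := fun is => K0 * q ^ ysize is).
  { intros x Hx. rewrite Forall_forall in HF. destruct (HF x Hx) as [Hlx _].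
    change (fold_right Nat.add 0%nat x) with (ysize x).
    assert (0 <= t ^ ysize x) by (apply pow_le; lra).
    rewrite Rabs_pos_eq by (apply Rmult_le_pos; [apply Rabs_pos|auto]).
    eapply Rle_trans. apply Rmult_le_compat_r; [auto|apply Hlog; auto].
    replace (INR (fact r) * (INR (fact r) * (E ^ r * rho ^ ysize x)) * t ^ ysize x)
      with (K0 * (rho * t) ^ ysize x) by (unfold K0; rewrite Rpow_mult_distr; ring).
    apply Rmult_le_compat_l; auto. apply pow_incr. unfold q. split; [apply Rmult_le_pos; lra|].
    rewrite Rmult_comm. apply Rmult_le_compat_r; lra. }
  rewrite lsum_scal. apply Rmult_le_compat_l; auto.
  set (Mx := ysize (map ysize S)).
  eapply Rle_trans; [apply lsum_incl with (S := grid r Mx); auto|].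
  - intros l Hl. rewrite Forall_forall in HF. destruct (HF l Hl) as [Hlx _].
    rewrite <- Hlx. apply in_grid. apply Forall_forall. intros x Hx.
    eapply Nat.le_trans; [apply in_le_ysize, Hx|]. apply in_le_ysize, in_map; auto.
  - intros; apply pow_le; lra.
  - apply grid_sum; auto.
Qed.
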